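(* For every $h>0$, the function $v(\cdot,h)$ satisfies $v_{yy}(y,h)>0$ in each of the three regions $y\ge e^{\lambda\beta h}$, $e^{(\lambda-1)\beta h}<y<e^{\lambda\beta h}$ and $(1-\lambda)e^{(\lambda-1)\beta h}\le y\le e^{(\lambda-1)\beta h}$ (using the corresponding piece of the formula). In particular the inverse Legendre transform $\inf_{y\ge(1-\lambda)e^{(\lambda-1)\beta h}}[v(y,h)+xy]$ is well defined, and the function $\pi^\dagger(y,h)$ is strictly positive for all $h>0$ and $y\ge(1-\lambda)e^{(\lambda-1)\beta h}$.
   Context: Constants: $r>0$, $\mu>r$, $\sigma>0$, $\beta>0$, $\lambda\in(0,1)$, $\kappa:=(\mu-r)/\sigma>0$, $r_{1,2}=\frac12(1\pm\sqrt{1+8r/\kappa^2})$ (so $r_1>1>0>r_2$ and $r_1(r_1-1)=r_2(r_2-1)=2r/\kappa^2$). For $h\ge0$: $C_6(h):=\frac{(1-\lambda)^{r_1-r_2}}{(r_1-r_2)\beta r}\Big[\frac{1}{1-r_2}e^{(\lambda-1)(1-r_2)\beta h}-\frac{\lambda}{\lambda(1-r_2)-(r_1-r_2)}e^{[\lambda(1-r_2)-(r_1-r_2)]\beta h}\Big]$, $C_4(h):=C_6(h)+\frac{(1-r_1)\kappa^2}{2(r_1-r_2)\beta r^2}e^{(\lambda-1)(1-r_2)\beta h}$, $C_2(h):=C_6(h)+\frac{(1-r_1)\kappa^2}{2(r_1-r_2)\beta r^2}\big[e^{(\lambda-1)(1-r_2)\beta h}-e^{\lambda(1-r_2)\beta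 h}\big]$, $C_3(h):=\frac{(r_2-1)\kappa^2}{2(r_1-r_2)\beta r^2}e^{\lambda(1-r_1)\beta h}$, $C_5(h):=\frac{(1-r_2)\kappa^2}{2(r_1-r_2)\beta r^2}\big[e^{(\lambda-1)(1-r_1)\beta h}-e^{\lambda(1-r_1)\beta h}\big]$. The dual function $v$ on $\{y\ge(1-\lambda)e^{(\lambda-1)\beta h}\}$ is $v(y,h)=C_2(h)y^{r_2}-\frac{1}{r\beta}e^{\lambda\beta h}$ if $y\ge e^{\lambda\beta h}$; $v(y,h)=C_3(h)y^{r_1}+C_4(h)y^{r_2}-\frac{y}{r\beta}+\frac{y}{r\beta}(\ln y-\lambda\beta h+\frac{\kappa^2}{2r})$ if $e^{(\lambda-1)\beta h}<y<e^{\lambda\beta h}$; $v(y,h)=C_5(h)y^{r_1}+C_6(h)y^{r_2}-\frac1rhy-\frac{1}{r\beta}e^{(\lambda-1)\beta h}$ if $(1-\lambda)e^{(\lambda-1)\beta h}\le y\le e^{(\lambda-1)\beta h}$. The feedback portfolio function is $\pi^\dagger(y,h)=\frac{\mu-r}{\sigma^2}\cdot\frac{2r}{\kappa^2}C_2(h)y^{r_2-1}$ if $y\ge e^{\lambda\beta h}$; $\frac{\mu-r}{\sigma^2}\big[\frac{2r}{\kappa^2}C_3(h)y^{r_1-1}+\frac{2r}{\kappa^2}C_4(h)y^{r_2-1}+\frac1{r\beta}\big]$ if $e^{(\lambda-1)\beta h}<y<e^{\lambda\beta h}$; $\frac{\mu-r}{\sigma^2}\big[\frac{2r}{\kappa^2}C_5(h)y^{r_1-1}+\frac{2r}{\kappa^2}C_6(h)y^{r_2-1}\big]$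 if $(1-\lambda)e^{(\lambda-1)\beta h}\le y\le e^{(\lambda-1)\beta h}$ (note $\pi^\dagger=\frac{\mu-r}{\sigma^2}yv_{yy}$). *)

(* Defs.v *)
From Stdlib Require Import Reals Lra.
From Coquelicot Require Import Coquelicot.
Open Scope R_scope.

Definition kappa (r mu sigma : R) : R := (mu - r) / sigma.

Definition r1 (r mu sigma : R) : R :=
  (1 + sqrt (1 + 8 * r / (kappa r mu sigma ^ 2))) / 2.
Definition r2 (r mu sigma : R) : R :=
  (1 - sqrt (1 + 8 * r / (kappa r mu sigma ^ 2))) / 2.

Definition pw (y p : R) : R := Rpower y p.

Section Consts.
Variables r mu sigma beta lam : R.
Let k := kappa r mu sigma.
Let a := r1 r mu sigma.
Let b := r2 r mu sigma.

Definition C6 (h : R) : R :=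
  pw (1 - lam) (a - b) / ((a - b) * beta * r) *
  (1 / (1 - b) * exp ((lam - 1) * (1 - b) * beta * h)
   - lam / (lam * (1 - b) - (a - b)) * exp ((lam * (1 - b) - (a - b)) * beta * h)).

Definition C4 (h : R) : R :=
  C6 h + (1 - a) * k ^ 2 / (2 * (a - b) * beta * r ^ 2)
         * exp ((lam - 1) * (1 - b) * beta * h).

Definition C2 (h : R) : R :=
  C6 h + (1 - a) * k ^ 2 / (2 * (a - b) * beta * r ^ 2)
         * (exp ((lam - 1) * (1 - b) * beta * h) - exp (lam * (1 - b) * beta * h)).

Definition C3 (h : R) : R :=
  (b - 1) * k ^ 2 / (2 * (a - b) * beta * r ^ 2) * exp (lam * (1 - a) * beta * h).

Definition C5 (h : R) : R :=
  (1 - b) * k ^ 2 / (2 * (a - b) * beta * r ^ 2)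
  * (exp ((lam - 1) * (1 - a) * beta * h) - exp (lam * (1 - a) * beta * h)).

Definition v_hi (y h : R) : R :=
  C2 h * pw y b - 1 / (r * beta) * exp (lam * beta * h).

Definition v_mid (y h : R) : R :=
  C3 h * pw y a + C4 h * pw y b - y / (r * beta)
  + y / (r * beta) * (ln y - lam * beta * h + k ^ 2 / (2 * r)).

Definition v_lo (y h : R) : R :=
  C5 h * pw y a + C6 h * pw y b - 1 / r * h * y
  - 1 / (r * beta) * exp ((lam - 1) * beta * h).

Definition yhi (h : R) : R := exp (lam * beta * h).
Definition ylo (h : R) : R := exp ((lam - 1) * beta * h).
Definition ymin (h : R) : R := (1 - lam) * exp ((lam - 1) * beta * h).

Definition v (y h : R) : R :=
  if Rle_dec (yhi h) y then v_hi y h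
  else if Rlt_dec (ylo h) y then v_mid y h
  else v_lo y h.

Definition pi_dagger (y h : R) : R :=
  if Rle_dec (yhi h) y then
    (mu - r) / sigma ^ 2 * (2 * r / k ^ 2 * C2 h * pw y (b - 1))
  else if Rlt_dec (ylo h) y then
    (mu - r) / sigma ^ 2 *
      (2 * r / k ^ 2 * C3 h * pw y (a - 1) + 2 * r / k ^ 2 * C4 h * pw y (b - 1)
       + 1 / (r * beta))
  else
    (mu - r) / sigma ^ 2 *
      (2 * r / k ^ 2 * C5 h * pw y (a - 1) + 2 * r / k ^ 2 * C6 h * pw y (b - 1)).

End Consts.

(* Main.v *)
Require Import Defs.
From Stdlib Require Import Reals Lra.
From Coquelicot Require Import Coquelicot.
Open Scope R_scope.

Lemma ab_facts r mu sigma : 0 < r -> r < mu -> 0 < sigma ->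
  0 < kappa r mu sigma ^ 2 /\ 1 < r1 r mu sigma /\ r2 r mu sigma < 0 /\
  r1 r mu sigma = 1 - r2 r mu sigma /\
  r1 r mu sigma * (r1 r mu sigma - 1) = 2 * r / kappa r mu sigma ^ 2 /\
  r2 r mu sigma * (r2 r mu sigma - 1) = 2 * r / kappa r mu sigma ^ 2.
Proof.
  intros hr hmu hs.
  assert (hk : 0 < kappa r mu sigma) by (unfold kappa; apply Rdiv_lt_0_compat; lra).
  assert (hk2 : 0 < kappa r mu sigma ^ 2) by (apply pow_lt; lra).
  assert (hq : 0 < 8 * r / kappa r mu sigma ^ 2) by (apply Rdiv_lt_0_compat; lra).
  assert (hsq : sqrt (1 + 8 * r / kappa r mu sigma ^ 2) * sqrt (1 + 8 * r / kappa r mu sigma ^ 2)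
     = 1 + 8 * r / kappa r mu sigma ^ 2) by (apply sqrt_sqrt; lra).
  assert (hs1 : 1 < sqrt (1 + 8 * r / kappa r mu sigma ^ 2)).
  { pose proof (sqrt_lt_1 1 (1 + 8 * r / kappa r mu sigma ^ 2)) as H1. rewrite sqrt_1 in H1. apply H1; lra. }
  unfold r1, r2.
  set (s := sqrt (1 + 8 * r / kappa r mu sigma ^ 2)) in *.
  set (q := 8 * r / kappa r mu sigma ^ 2) in *.
  assert (hq' : 2 * r / kappa r mu sigma ^ 2 = q / 4) by (unfold q; field; apply Rgt_not_eq; lra).
  rewrite hq'.
  repeat split; try lra; nra.
Qed.
Section P.
Variables (r mu sigma beta lam : R)
  (hr : 0 < r) (hmu : r < mu) (hsig : 0 < sigma) (hbeta : 0 < beta)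
  (hlam0 : 0 < lam) (hlam1 : lam < 1).

Lemma C6_pos h : 0 < h -> 0 < C6 r mu sigma beta lam h.
Proof.
  intros hh. destruct (ab_facts r mu sigma hr hmu hsig) as (hk & ha & hb & hab & hA & hB).
  unfold C6, pw, Rpower.
  set (a := r1 r mu sigma) in *. set (b := r2 r mu sigma) in *.
  apply Rmult_lt_0_compat.
  - apply Rdiv_lt_0_compat. apply exp_pos.
    apply Rmult_lt_0_compat; [apply Rmult_lt_0_compat|]; lra.
  - assert (hd : lam * (1 - b) - (a - b) < 0) by nra.
    assert (0 < 1 / (1 - b) * exp ((lam - 1) * (1 - b) * beta * h)).
    { apply Rmult_lt_0_compat. apply Rdiv_lt_0_compat; lra. apply exp_pos. }
    assert (0 < lam / (- (lam * (1 - b) - (a - b))) * exp ((lam * (1 - b) - (a - b)) * beta * h)).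
    { apply Rmult_lt_0_compat. apply Rdiv_lt_0_compat; lra. apply exp_pos. }
    replace (lam / (lam * (1 - b) - (a - b))) with (- (lam / (- (lam * (1 - b) - (a - b))))) by (field; lra).
    lra.
Qed.

Lemma C5_pos h : 0 < h -> 0 < C5 r mu sigma beta lam h.
Proof.
  intros hh. destruct (ab_facts r mu sigma hr hmu hsig) as (hk & ha & hb & hab & hA & hB).
  unfold C5.
  set (a := r1 r mu sigma) in *. set (b := r2 r mu sigma) in *.
  apply Rmult_lt_0_compat.
  - apply Rdiv_lt_0_compat. apply Rmult_lt_0_compat; lra.
    apply Rmult_lt_0_compat; [|apply pow_lt; lra].
    apply Rmult_lt_0_compat; lra.
  - apply Rlt_Rminus. apply exp_increasing.
    assert (0 < - b * beta * h) by (apply Rmult_lt_0_compat; [apply Rmult_lt_0_compat|]; lra).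
    rewrite hab. nra.
Qed.

Lemma C2_pos h : 0 < h -> 0 < C2 r mu sigma beta lam h.
Proof.
  intros hh. pose proof (C6_pos h hh).
  destruct (ab_facts r mu sigma hr hmu hsig) as (hk & ha & hb & hab & hA & hB).
  unfold C2.
  set (c6 := C6 r mu sigma beta lam h) in *.
  set (a := r1 r mu sigma) in *. set (b := r2 r mu sigma) in *.
  set (Q := kappa r mu sigma ^ 2 / (2 * (a - b) * beta * r ^ 2)).
  assert (hQ : 0 < Q).
  { apply Rdiv_lt_0_compat. lra.
    apply Rmult_lt_0_compat; [|apply pow_lt; lra].
    apply Rmult_lt_0_compat; lra. }
  assert (he : exp ((lam - 1) * (1 - b) * beta * h) < exp (lam * (1 - b) * beta * h)).
  { apply exp_increasing.
    assert (0 < (1 - b) * beta * h) by (apply Rmult_lt_0_compat; [apply Rmult_lt_0_compat|]; lra).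
    nra. }
  assert (0 < (a - 1) * Q * (exp (lam * (1 - b) * beta * h) - exp ((lam - 1) * (1 - b) * beta * h))).
  { apply Rmult_lt_0_compat. apply Rmult_lt_0_compat; lra. lra. }
  replace ((1 - a) * kappa r mu sigma ^ 2 / (2 * (a - b) * beta * r ^ 2) *
     (exp ((lam - 1) * (1 - b) * beta * h) - exp (lam * (1 - b) * beta * h)))
  with ((a - 1) * Q * (exp (lam * (1 - b) * beta * h) - exp ((lam - 1) * (1 - b) * beta * h))).
  lra. unfold Q. field. split; [|split]; lra.
Qed.

Lemma mid_M h y : 0 < h -> ylo beta lam h < y < yhi beta lam h ->
  0 < 2 * r / kappa r mu sigma ^ 2 * C3 r mu sigma beta lam h * pw y (r1 r mu sigma - 1)
    + 2 * r / kappa r mu sigma ^ 2 * C4 r mu sigma beta lam h * pw y (r2 r mu sigma - 1)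
    + 1 / (r * beta).
Proof.
  intros hh [hy1 hy2]. pose proof (C6_pos h hh) as hc6.
  destruct (ab_facts r mu sigma hr hmu hsig) as (hk & ha & hb & hab & hA & hB).
  unfold ylo, yhi in *.
  assert (hy0 : 0 < y) by (pose proof (exp_pos ((lam - 1) * beta * h)); lra).
  assert (hL1 : (lam - 1) * beta * h < ln y) by (rewrite <- (ln_exp ((lam - 1) * beta * h)); apply ln_increasing; [apply exp_pos|lra]).
  assert (hL2 : ln y < lam * beta * h) by (rewrite <- (ln_exp (lam * beta * h)); apply ln_increasing; lra).
  unfold C3, C4, pw, Rpower.
  set (c6 := C6 r mu sigma beta lam h) in *.
  set (a := r1 r mu sigma) in *. set (b := r2 r mu sigma) in *.
  set (L := ln y) in *.
  assert (hX : exp (lam * (1 - a) * beta * h) * exp ((a - 1) * L) < 1).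
  { rewrite <- exp_plus. apply Rlt_le_trans with (exp 0); [|rewrite exp_0; lra]. apply exp_increasing. rewrite hab.
    assert (0 < (- b) * (lam * beta * h - L)) by (apply Rmult_lt_0_compat; lra). nra. }
  assert (hY : exp ((lam - 1) * (1 - b) * beta * h) * exp ((b - 1) * L) < 1).
  { rewrite <- exp_plus. apply Rlt_le_trans with (exp 0); [|rewrite exp_0; lra]. apply exp_increasing. 
    assert (0 < (1 - b) * (L - (lam - 1) * beta * h)) by (apply Rmult_lt_0_compat; lra). nra. }
  set (X := exp (lam * (1 - a) * beta * h) * exp ((a - 1) * L)) in *.
  set (Y := exp ((lam - 1) * (1 - b) * beta * h) * exp ((b - 1) * L)) in *.
  assert (hD : 0 < exp ((b - 1) * L)) by apply exp_pos.
  assert (hXY : 0 < a * (1 - X) - b * (1 - Y)).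
  { replace (a * (1 - X) - b * (1 - Y)) with (a * (1 - X) + (- b) * (1 - Y)) by ring.
    apply Rplus_lt_0_compat; apply Rmult_lt_0_compat; lra. }
  assert (hP : 0 < 1 / ((a - b) * beta * r)).
  { apply Rdiv_lt_0_compat. lra. apply Rmult_lt_0_compat; [apply Rmult_lt_0_compat|]; lra. }
  assert (h1 : 0 < 1 / ((a - b) * beta * r) * (a * (1 - X) - b * (1 - Y))).
  { apply Rmult_lt_0_compat; lra. }
  assert (h2 : 0 < 2 * r / kappa r mu sigma ^ 2 * c6 * exp ((b - 1) * L)).
  { apply Rmult_lt_0_compat; [apply Rmult_lt_0_compat|]; try lra.
    apply Rdiv_lt_0_compat; lra. }
  match goal with |- 0 < ?G => replace G with
    (1 / ((a - b) * beta * r) * (a * (1 - X) - b * (1 - Y)) +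
     2 * r / kappa r mu sigma ^ 2 * c6 * exp ((b - 1) * L)) end.
  lra.
  unfold X, Y. rewrite hab. field.
  assert (kappa r mu sigma <> 0) by (intro E; rewrite E in hk; simpl in hk; lra).
  repeat split; lra.
Qed.


Lemma d2 (f f1 f2 : R -> R) y :
  (forall z, 0 < z -> is_derive f z (f1 z)) ->
  (forall z, 0 < z -> is_derive f1 z (f2 z)) -> 0 < y ->
  ex_derive_n f 2 y /\ Derive_n f 2 y = f2 y.
Proof.
  intros H1 H2 hy.
  assert (Hloc : locally y (fun z => f1 z = Derive f z)).
  { apply (filter_imp (fun z => 0 < z)).
    - intros z hz. symmetry. apply is_derive_unique. auto.
    - exact (open_gt 0 y hy). }
  assert (H : is_derive (Derive f) y (f2 y)) by (apply is_derive_ext_loc with f1; auto).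
  split.
  - simpl. exists (f2 y). exact H.
  - simpl. apply is_derive_unique. exact H.
Qed.

Definition fhi1 h z := C2 r mu sigma beta lam h * (r2 r mu sigma * exp (r2 r mu sigma * ln z) / z).
Definition fhi2 h z := C2 r mu sigma beta lam h *
  (r2 r mu sigma * (r2 r mu sigma - 1) * exp (r2 r mu sigma * ln z) / (z * z)).

Lemma Dhi1 h z : 0 < z -> is_derive (fun y => v_hi r mu sigma beta lam y h) z (fhi1 h z).
Proof. intros hz. unfold v_hi, fhi1, pw, Rpower. auto_derive. lra. field. lra. Qed.
Lemma Dhi2 h z : 0 < z -> is_derive (fhi1 h) z (fhi2 h z).
Proof. intros hz. unfold fhi1, fhi2. auto_derive. lra. field. lra. Qed.

Definition fmid1 h z := C3 r mu sigma beta lam h * (r1 r mu sigma * exp (r1 r mu sigma * ln z) / z)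
  + C4 r mu sigma beta lam h * (r2 r mu sigma * exp (r2 r mu sigma * ln z) / z)
  + (ln z - lam * beta * h + kappa r mu sigma ^ 2 / (2 * r)) / (r * beta).
Definition fmid2 h z :=
  C3 r mu sigma beta lam h * (r1 r mu sigma * (r1 r mu sigma - 1) * exp (r1 r mu sigma * ln z) / (z * z))
  + C4 r mu sigma beta lam h * (r2 r mu sigma * (r2 r mu sigma - 1) * exp (r2 r mu sigma * ln z) / (z * z))
  + 1 / (r * beta * z).

Lemma Dmid1 h z : 0 < z -> is_derive (fun y => v_mid r mu sigma beta lam y h) z (fmid1 h z).
Proof. intros hz. unfold v_mid, fmid1, pw, Rpower. auto_derive. lra. field. lra. Qed.
Lemma Dmid2 h z : 0 < z -> is_derive (fmid1 h) z (fmid2 h z).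
Proof. intros hz. unfold fmid1, fmid2. auto_derive. lra. field. lra. Qed.

Definition flo1 h z := C5 r mu sigma beta lam h * (r1 r mu sigma * exp (r1 r mu sigma * ln z) / z)
  + C6 r mu sigma beta lam h * (r2 r mu sigma * exp (r2 r mu sigma * ln z) / z) - 1 / r * h.
Definition flo2 h z :=
  C5 r mu sigma beta lam h * (r1 r mu sigma * (r1 r mu sigma - 1) * exp (r1 r mu sigma * ln z) / (z * z))
  + C6 r mu sigma beta lam h * (r2 r mu sigma * (r2 r mu sigma - 1) * exp (r2 r mu sigma * ln z) / (z * z)).

Lemma Dlo1 h z : 0 < z -> is_derive (fun y => v_lo r mu sigma beta lam y h) z (flo1 h z).
Proof. intros hz. unfold v_lo, flo1, pw, Rpower. auto_derive. lra. field. lra. Qed.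
Lemma Dlo2 h z : 0 < z -> is_derive (flo1 h) z (flo2 h z).
Proof. intros hz. unfold flo1, flo2. auto_derive. lra. field. lra. Qed.

Lemma hi_pos h z : 0 < h -> 0 < z -> 0 < fhi2 h z.
Proof.
  intros hh hz. pose proof (C2_pos h hh).
  destruct (ab_facts r mu sigma hr hmu hsig) as (hk & ha & hb & hab & hA & hB).
  unfold fhi2. apply Rmult_lt_0_compat; auto.
  apply Rdiv_lt_0_compat; [|apply Rmult_lt_0_compat; lra].
  apply Rmult_lt_0_compat; [nra|apply exp_pos].
Qed.

Lemma lo_pos h z : 0 < h -> 0 < z -> 0 < flo2 h z.
Proof.
  intros hh hz. pose proof (C5_pos h hh). pose proof (C6_pos h hh).
  destruct (ab_facts r mu sigma hr hmu hsig) as (hk & ha & hb & hab & hA & hB).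
  unfold flo2. apply Rplus_lt_0_compat; apply Rmult_lt_0_compat; auto;
  (apply Rdiv_lt_0_compat; [|apply Rmult_lt_0_compat; lra]);
  (apply Rmult_lt_0_compat; [nra|apply exp_pos]).
Qed.

Lemma mid_pos h y : 0 < h -> ylo beta lam h < y < yhi beta lam h -> 0 < fmid2 h y.
Proof.
  intros hh hy. pose proof (mid_M h y hh hy) as HM.
  destruct (ab_facts r mu sigma hr hmu hsig) as (hk & ha & hb & hab & hA & hB).
  assert (hy0 : 0 < y) by (unfold ylo in hy; pose proof (exp_pos ((lam - 1) * beta * h)); lra).
  unfold pw, Rpower in HM.
  assert (ea : exp (r1 r mu sigma * ln y) = exp ((r1 r mu sigma - 1) * ln y) * y).
  { rewrite <- (exp_ln y) at 3 by lra. rewrite <- exp_plus. f_equal. ring. }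
  assert (eb : exp (r2 r mu sigma * ln y) = exp ((r2 r mu sigma - 1) * ln y) * y).
  { rewrite <- (exp_ln y) at 3 by lra. rewrite <- exp_plus. f_equal. ring. }
  unfold fmid2. rewrite ea, eb, hA, hB.
  match type of HM with 0 < ?M => replace (_ + _ + _) with (M / y) end.
  apply Rdiv_lt_0_compat; lra.
  field. assert (kappa r mu sigma <> 0) by (intro E; rewrite E in hk; simpl in hk; lra). repeat split; lra.
Qed.

End P.

Theorem lemma3p1 (r mu sigma beta lam : R)
  (hr : 0 < r) (hmu : r < mu) (hsig : 0 < sigma) (hbeta : 0 < beta)
  (hlam0 : 0 < lam) (hlam1 : lam < 1) :
  forall h : R, 0 < h ->
  (* v_yy > 0 on each region, using the corresponding piece *)
  (forall y, yhi beta lam h <= y ->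
     ex_derive_n (fun z => v_hi r mu sigma beta lam z h) 2 y /\
     0 < Derive_n (fun z => v_hi r mu sigma beta lam z h) 2 y) /\
  (forall y, ylo beta lam h < y < yhi beta lam h ->
     ex_derive_n (fun z => v_mid r mu sigma beta lam z h) 2 y /\
     0 < Derive_n (fun z => v_mid r mu sigma beta lam z h) 2 y) /\
  (forall y, ymin beta lam h <= y <= ylo beta lam h ->
     ex_derive_n (fun z => v_lo r mu sigma beta lam z h) 2 y /\
     0 < Derive_n (fun z => v_lo r mu sigma beta lam z h) 2 y) /\
  (* the inverse Legendre transform inf_{y >= ymin} [v(y,h) + x y] is finite *)
  (forall x, 0 < x -> exists m : R,
     forall y, ymin beta lam h <= y -> m <= v r mu sigma beta lam y h + x * y) /\
  (* pi_dagger is strictly positive on the whole domain *)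
  (forall y, ymin beta lam h <= y -> 0 < pi_dagger r mu sigma beta lam y h).
Proof.
  intros h hh.
  destruct (ab_facts r mu sigma hr hmu hsig) as (hk & ha & hb & hab & hA & hB).
  assert (hmin : 0 < ymin beta lam h) by (unfold ymin; apply Rmult_lt_0_compat; [lra|apply exp_pos]).
  assert (hml : ymin beta lam h <= ylo beta lam h).
  { unfold ymin, ylo. pose proof (exp_pos ((lam - 1) * beta * h)). nra. }
  assert (hlh : ylo beta lam h < yhi beta lam h).
  { unfold ylo, yhi. apply exp_increasing. nra. }
  split; [|split; [|split; [|split]]].
  - intros y hy.
    destruct (d2 (fun z => v_hi r mu sigma beta lam z h) (fhi1 r mu sigma beta lam h)
       (fhi2 r mu sigma beta lam h) y) as [E1 E2].
    + intros; apply Dhi1; auto.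
    + intros; apply Dhi2; auto.
    + lra.
    + split; [exact E1|]. rewrite E2. apply hi_pos; auto; lra.
  - intros y hy.
    destruct (d2 (fun z => v_mid r mu sigma beta lam z h) (fmid1 r mu sigma beta lam h)
       (fmid2 r mu sigma beta lam h) y) as [E1 E2].
    + intros; apply Dmid1; auto.
    + intros; apply Dmid2; auto.
    + lra.
    + split; [exact E1|]. rewrite E2. apply mid_pos; auto.
  - intros y hy.
    destruct (d2 (fun z => v_lo r mu sigma beta lam z h) (flo1 r mu sigma beta lam h)
       (flo2 r mu sigma beta lam h) y) as [E1 E2].
    + intros; apply Dlo1; auto.
    + intros; apply Dlo2; auto.
    + lra.
    + split; [exact E1|]. rewrite E2. apply lo_pos; auto; lra.
  - intros x hx.
    destruct (continuity_ab_min (fun z => v_mid r mu sigma beta lam z h)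
       (ylo beta lam h) (yhi beta lam h)) as [m1 [Hm1 _]].
    { lra. }
    { intros c hc. apply continuity_pt_filterlim. apply (ex_derive_continuous (fun z => v_mid r mu sigma beta lam z h)).
      exists (fmid1 r mu sigma beta lam h c). apply Dmid1; auto; lra. }
    destruct (continuity_ab_min (fun z => v_lo r mu sigma beta lam z h)
       (ymin beta lam h) (ylo beta lam h)) as [m2 [Hm2 _]].
    { lra. }
    { intros c hc. apply continuity_pt_filterlim. apply (ex_derive_continuous (fun z => v_lo r mu sigma beta lam z h)).
      exists (flo1 r mu sigma beta lam h c). apply Dlo1; auto; lra. }
    exists (Rmin (Rmin (v_mid r mu sigma beta lam m1 h) (v_lo r mu sigma beta lam m2 h))
             (- (1 / (r * beta) * exp (lam * beta * h)))).
    intros y hy.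
    assert (hxy : 0 < x * y) by (apply Rmult_lt_0_compat; lra).
    pose proof (Rmin_l (Rmin (v_mid r mu sigma beta lam m1 h) (v_lo r mu sigma beta lam m2 h))
             (- (1 / (r * beta) * exp (lam * beta * h)))).
    pose proof (Rmin_r (Rmin (v_mid r mu sigma beta lam m1 h) (v_lo r mu sigma beta lam m2 h))
             (- (1 / (r * beta) * exp (lam * beta * h)))).
    pose proof (Rmin_l (v_mid r mu sigma beta lam m1 h) (v_lo r mu sigma beta lam m2 h)).
    pose proof (Rmin_r (v_mid r mu sigma beta lam m1 h) (v_lo r mu sigma beta lam m2 h)).
    unfold v. destruct (Rle_dec (yhi beta lam h) y) as [G1|G1].
    + unfold v_hi.
      assert (0 < C2 r mu sigma beta lam h * pw y (r2 r mu sigma)).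
      { apply Rmult_lt_0_compat. apply C2_pos; auto. unfold pw, Rpower. apply exp_pos. }
      lra.
    + destruct (Rlt_dec (ylo beta lam h) y) as [G2|G2].
      * pose proof (Hm1 y ltac:(lra)). simpl in *. lra.
      * pose proof (Hm2 y ltac:(lra)). simpl in *. lra.
  - intros y hy.
    assert (hc : 0 < (mu - r) / sigma ^ 2) by (apply Rdiv_lt_0_compat; [lra|apply pow_lt; lra]).
    assert (hq : 0 < 2 * r / kappa r mu sigma ^ 2) by (apply Rdiv_lt_0_compat; lra).
    assert (hpw : forall p, 0 < pw y p) by (intros; unfold pw, Rpower; apply exp_pos).
    unfold pi_dagger. destruct (Rle_dec (yhi beta lam h) y) as [G1|G1].
    + apply Rmult_lt_0_compat; auto.
      apply Rmult_lt_0_compat; auto. apply Rmult_lt_0_compat; auto. apply C2_pos; auto.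
    + destruct (Rlt_dec (ylo beta lam h) y) as [G2|G2].
      * apply Rmult_lt_0_compat; auto. apply mid_M; auto. lra.
      * apply Rmult_lt_0_compat; auto.
        apply Rplus_lt_0_compat; (apply Rmult_lt_0_compat; [apply Rmult_lt_0_compat|]; auto).
        apply C5_pos; auto. apply C6_pos; auto.
Qed.
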